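(* Let $D$ be an instance all of whose tuples are endogenous ($D^n=D$), let $\mathcal{Q}$ be a monotone query, and let $\bar a\in\mathcal{Q}(D)$. A tuple $t$ is an actual cause for $\bar a$ if and only if there is $D'\subseteq D$ with $t\in(D\smallsetminus D')\subseteq D^n$ and $(D,D',\bar a)\in\mathcal{MSSEP}^{s}(\mathcal{Q})$.
   Context: A query $\mathcal{Q}$ is monotone if $D_1\subseteq D_2$ implies $\mathcal{Q}(D_1)\subseteq\mathcal{Q}(D_2)$; $D\models\mathcal{Q}(\bar a)$ means $\bar a\in\mathcal{Q}(D)$. A tuple $\tau\in D^n$ is an actual cause for $\bar a$ if there is $\Gamma\subseteq D^n$ with $D\smallsetminus\Gamma\models\mathcal{Q}(\bar a)$ and $D\smallsetminus(\Gamma\cup\{\tau\})\not\models\mathcal{Q}(\bar a)$. $\mathcal{MSSEP}^{s}(\mathcal{Q})$ is the set of triples $(D,D',\bar a)$ with $\bar a\in\mathcal{Q}(D)$, $D'\subseteq D$, $\bar a\notin\mathcal{Q}(D')$, and $D'$ subset-maximal among subsets of $D$ with this last property. *)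

(* Defs.v *)
From mathcomp Require Import all_boot.
From mathcomp Require Import finmap.
Set Implicit Arguments. Unset Strict Implicit. Unset Printing Implicit Defensive.
Local Open Scope fset_scope.

(* A database instance is a finite set of tuples (facts) of type T.
   A query maps an instance to its set of answers: Q D a means "D |= Q(a)". *)
Definition query (T : choiceType) (A : Type) := {fset T} -> A -> Prop.

Definition monotone (T : choiceType) (A : Type) (Q : query T A) : Prop :=
  forall (D1 D2 : {fset T}) (a : A), D1 `<=` D2 -> Q D1 a -> Q D2 a.

(* tau is an actual cause for a, where Dn is the set of endogenous tuples of D *)
Definition actual_cause (T : choiceType) (A : Type) (Q : query T A)
  (D Dn : {fset T}) (a : A) (tau : T) : Prop :=
  tau \in Dn /\
  exists Gamma : {fset T}, Gamma `<=` Dn /\ Q (D `\` Gamma) a /\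
     ~ Q (D `\` (Gamma `|` [fset tau])) a.

Definition MSSEP (T : choiceType) (A : Type) (Q : query T A)
  (D D' : {fset T}) (a : A) : Prop :=
  [/\ Q D a, D' `<=` D, ~ Q D' a &
      forall D'' : {fset T}, D' `<=` D'' -> D'' `<=` D -> ~ Q D'' a -> D'' = D'].

(* Main.v *)
Require Import Defs.
From mathcomp Require Import all_boot.
From mathcomp Require Import finmap.
From mathcomp Require Import zify.
From Stdlib Require Import Classical.
Local Open Scope fset_scope.

Lemma maximal_ext (T : choiceType) (A : Type) (Q : query T A) (D : {fset T}) (a : A) :
  forall n (S : {fset T}), S `<=` D -> ~ Q S a -> #|` D| <= #|` S| + n ->
  exists D', [/\ S `<=` D', D' `<=` D, ~ Q D' a &
      forall D'' : {fset T}, D' `<=` D'' -> D'' `<=` D -> ~ Q D'' a -> D'' = D'].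
Proof.
elim=> [|n IH] S SD nQ Hc.
  exists S; split => // D'' h1 h2 _.
  apply/eqP; rewrite eq_sym eqEfsubset h1 /=.
  have := fsubset_leq_card h2.
  move: (fsubset_leq_card h1) => c1 c2.
  have : #|` S| = #|` D''| by lia.
  move=> e; apply/negPn/negP => hn.
  have : S `<` D'' by rewrite fproperE h1 hn.
  move/fproper_ltn_card; lia.
destruct (classic (forall D'' : {fset T}, S `<=` D'' -> D'' `<=` D -> ~ Q D'' a -> D'' = S)) as [H|H].
  by exists S.
apply not_all_ex_not in H as [D'' H].
destruct (classic (S `<=` D'')) as [h1|h1]; last by exfalso; apply H.
destruct (classic (D'' `<=` D)) as [h2|h2]; last by exfalso; apply H.
destruct (classic (Q D'' a)) as [h3|h3]; first by exfalso; apply H.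
have ne : D'' <> S by move=> e; apply H.
have pr : S `<` D''.
  rewrite fproperEneq h1 andbT; apply/eqP => e; apply ne; by rewrite e.
have lt := fproper_ltn_card pr.
have [D' [s1 s2 s3 s4]] := IH D'' h2 h3 ltac:(lia).
exists D'; split => //; exact: fsubset_trans h1 s1.
Qed.

Theorem proposition10 (T : choiceType) (A : Type) (Q : query T A)
  (D Dn : {fset T}) (a : A) (t : T) :
  Dn = D -> monotone Q -> Q D a ->
  (actual_cause Q D Dn a t <->
   exists D' : {fset T}, [/\ t \in D `\` D', D `\` D' `<=` Dn & MSSEP Q D D' a]).
Proof.
move=> -> mon QD; split.
  move=> [tD [G [GD [Q1 Q2]]]].
  have [D' [s1 s2 s3 s4]] := @maximal_ext T A Q D a #|` D| _ (fsubsetDl _ _) Q2 ltac:(lia).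
  exists D'; split => //.
  - rewrite inE tD andbT; apply/negP => tD'.
    apply s3; apply: mon Q1; apply/fsubsetP => x.
    rewrite inE => /andP [xG xD].
    case: (eqVneq x t) => [->//|xt].
    apply: (fsubsetP s1); rewrite !inE xD andbT negb_or xG /=.
    by rewrite xt.
  - exact: fsubsetDl.
move=> [D' [tD _ [_ s2 s3 s4]]].
move: tD; rewrite inE => /andP [tnD' tD].
split => //.
exists (D `\` (D' `|` [fset t])); split; first exact: fsubsetDl.
have e1 : D `\` (D `\` (D' `|` [fset t])) = D' `|` [fset t].
  apply/fsetP => x; rewrite !inE.
  case: (eqVneq x t) => [->|xt]; first by rewrite tD orbT.
  case xD': (x \in D'); last by rewrite /= ?andbF ?andbT; case: (x \in D).
  by rewrite (fsubsetP s2 x xD').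
have e2 : D `\` (D `\` (D' `|` [fset t]) `|` [fset t]) = D'.
  apply/fsetP => x; rewrite !inE.
  case: (eqVneq x t) => [->|xt]; first by rewrite (negbTE tnD').
  case xD': (x \in D'); last by rewrite /= ?andbF ?andbT; case: (x \in D).
  by rewrite (fsubsetP s2 x xD').
rewrite e1 e2; split => //.
apply: NNPP => nQ.
have := s4 _ (fsubsetUl _ _) _ nQ.
have sub : D' `|` [fset t] `<=` D.
  by rewrite fsubUset s2 fsub1set tD.
move=> /(_ sub) e.
by move: tnD'; rewrite -e !inE eqxx orbT.
Qed.
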